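(* Suppose $M$ is a real symmetric $g\times g$ matrix of signature $(g-1,1)$, and $c \in \mathbb{C}^g$ satisfies $\overline{c}^\top M c < 0$. Then $c^\top Mc \neq 0$, and the real symmetric matrix $M+M\operatorname{Re}\left(\left(-\tfrac12 c^\top Mc\right)^{-1}cc^\top\right)M$ is positive definite. *)

(* Defs.v *)
From HB Require Import structures.
From mathcomp Require Import all_boot all_order all_algebra.
From mathcomp Require Import complex.
Set Implicit Arguments. Unset Strict Implicit. Unset Printing Implicit Defensive.
Import Order.TTheory GRing.Theory Num.Theory.
Local Open Scope ring_scope.

(* signature (p,q) of a real symmetric matrix: its characteristic polynomial
   splits over R (as it does for symmetric matrices) with eigenvalue list s
   (with multiplicity) having p positive and q negative entries. *)
Definition has_signature (R : rcfType) (g : nat) (M : 'M[R]_g) (p q : nat) :=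
  exists s : seq R,
    char_poly M = \prod_(x <- s) ('X - x%:P) /\
    count (fun x => 0 < x) s = p /\ count (fun x => x < 0) s = q.

Definition sym_mx (R : rcfType) (g : nat) (M : 'M[R]_g) := M^T = M.

Definition posdef_mx (R : rcfType) (g : nat) (A : 'M[R]_g) :=
  forall v : 'cV[R]_g, v != 0 -> 0 < (v^T *m A *m v) 0 0.

Definition mxC (R : rcfType) m n (A : 'M[R]_(m, n)) : 'M[R[i]]_(m, n) :=
  map_mx (fun x => x%:C%C) A.
Definition mxconj (R : rcfType) m n (A : 'M[R[i]]_(m, n)) : 'M[R[i]]_(m, n) :=
  map_mx (fun z => (z^*)%C) A.
Definition mxRe (R : rcfType) m n (A : 'M[R[i]]_(m, n)) : 'M[R]_(m, n) :=
  map_mx (@complex.Re R) A.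

(* Main.v *)
Require Import Defs.
From HB Require Import structures.
From mathcomp Require Import all_boot all_order all_algebra.
From mathcomp Require Import complex.
From mathcomp Require Import ring lra zify.
Import Order.TTheory GRing.Theory Num.Theory.
Local Open Scope ring_scope.
Set Implicit Arguments. Unset Strict Implicit. Unset Printing Implicit Defensive.

Definition bl {T : comNzRingType} {n} (M : 'M[T]_n) (x y : 'cV[T]_n) : T :=
  (x^T *m M *m y) 0 0.

Lemma blDr {T : comNzRingType} n (M : 'M[T]_n) x y z :
  bl M x (y + z) = bl M x y + bl M x z.
Proof. by rewrite /bl mulmxDr mxE. Qed.
Lemma blDl {T : comNzRingType} n (M : 'M[T]_n) x y z :
  bl M (x + y) z = bl M x z + bl M y z.
Proof. by rewrite /bl linearD /= !mulmxDl mxE. Qed.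
Lemma blZr {T : comNzRingType} n (M : 'M[T]_n) x a y :
  bl M x (a *: y) = a * bl M x y.
Proof. by rewrite /bl -scalemxAr mxE. Qed.
Lemma blZl {T : comNzRingType} n (M : 'M[T]_n) a x y :
  bl M (a *: x) y = a * bl M x y.
Proof. by rewrite /bl linearZ /= -!scalemxAl mxE. Qed.
Lemma blNr {T : comNzRingType} n (M : 'M[T]_n) x y :
  bl M x (- y) = - bl M x y.
Proof. by rewrite -scaleN1r blZr mulN1r. Qed.
Lemma blNl {T : comNzRingType} n (M : 'M[T]_n) x y :
  bl M (- x) y = - bl M x y.
Proof. by rewrite -scaleN1r blZl mulN1r. Qed.
Lemma blBr {T : comNzRingType} n (M : 'M[T]_n) x y z :
  bl M x (y - z) = bl M x y - bl M x z.
Proof. by rewrite blDr blNr. Qed.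
Lemma blBl {T : comNzRingType} n (M : 'M[T]_n) x y z :
  bl M (x - y) z = bl M x z - bl M y z.
Proof. by rewrite blDl blNl. Qed.
Lemma blC {T : comNzRingType} n (M : 'M[T]_n) x y : M^T = M ->
  bl M x y = bl M y x.
Proof.
move=> sM; rewrite /bl; transitivity ((x^T *m M *m y)^T 0 0); first by rewrite [RHS]mxE.
by rewrite !trmx_mul trmxK sM mulmxA.
Qed.

Lemma char_poly_simil (F : fieldType) n (P D : 'M[F]_n) : P \in unitmx ->
  char_poly (invmx P *m D *m P) = char_poly D.
Proof.
move=> uP; rewrite /char_poly /char_poly_mx.
set f := (@polyC F).
have -> : 'X%:M - map_mx f (invmx P *m D *m P) =
  map_mx f (invmx P) *m ('X%:M - map_mx f D) *m map_mx f P.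
  rewrite mulmxBr mulmxBl !map_mxM; congr (_ - _).
  by rewrite scalar_mxC -mulmxA -map_mxM mulVmx // map_mx1 mulmx1.
rewrite !det_mulmx mulrC mulrA -det_mulmx -map_mxM mulmxV // map_mx1 det1.
by rewrite mul1r.
Qed.


Lemma mxCE (R : rcfType) m n (A : 'M[R]_(m,n)) : mxC A = map_mx (real_complex R) A.
Proof. by apply/matrixP => i j; rewrite !mxE. Qed.

Lemma conjc_real (R : rcfType) (x : R) : ((x%:C)^*)%C = x%:C%C.
Proof. by apply/eqP; rewrite eq_complex /= oppr0 !eqxx. Qed.

Lemma mxconj_mxC (R : rcfType) m n (A : 'M[R]_(m,n)) : mxconj (mxC A) = mxC A.
Proof. by apply/matrixP => i j; rewrite !mxE conjc_real. Qed.

Lemma mxconjE (R : rcfType) m n (A : 'M[R[i]]_(m,n)) : mxconj A = map_mx Num.conj A.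
Proof. by []. Qed.

Lemma bl_mxC (R : rcfType) n (M : 'M[R]_n) x y :
  bl (mxC M) (mxC x) (mxC y) = (bl M x y)%:C%C.
Proof. by rewrite !mxCE /bl map_trmx -!map_mxM mxE. Qed.

Lemma mxC_tr (R : rcfType) n (M : 'M[R]_n) : (mxC M)^T = mxC M^T.
Proof. by rewrite !mxCE map_trmx. Qed.

Lemma mxC_normal (R : rcfType) n (M : 'M[R]_n) : M^T = M -> mxC M \is normalmx.
Proof.
move=> sM; have E : map_mx Num.conj (mxC M)^T = mxC M.
  by rewrite mxC_tr sM -mxconjE mxconj_mxC.
by rewrite qualifE E.
Qed.

Lemma Hsum (R : rcfType) n (M : 'M[R]_n) (u w : 'cV[R[i]]_n) : M^T = M ->
  bl (mxC M) (mxconj u) w =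
  \sum_i (((spectralmx (mxC M)) *m u) i 0)^* * spectral_diag (mxC M) 0 i *
          ((spectralmx (mxC M)) *m w) i 0.
Proof.
move=> sM; have := orthomx_spectralP (mxC_normal sM).
rewrite invmx_unitary ?spectral_unitarymx //.
set P := spectralmx _; set d := spectral_diag _ => hMC.
rewrite /bl hMC !mulmxA.
have -> : (mxconj u)^T *m map_mx Num.conj P^T = (map_mx Num.conj (P *m u))^T.
  rewrite mxconjE map_mxM trmx_mul; congr (_ *m _).
  by apply/matrixP => i j; rewrite !mxE.
rewrite -[_ *m P *m w]mulmxA mxE; apply: eq_bigr => i _.
rewrite !mxE (bigD1 i) //= big1 ?addr0; last first.
  by move=> j /negbTE nji; rewrite !mxE nji mulr0n mulr0.
by rewrite !mxE eqxx mulr1n.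
Qed.


Lemma count_enum_card (g : nat) (p : pred 'I_g) : count p (index_enum 'I_g) = #|p|.
Proof. by rewrite cardE -deprecated_filter_index_enum size_filter. Qed.

Lemma sig_CP (R : rcfType) g (M : 'M[R]_g) : M^T = M -> has_signature M g.-1 1 ->
  forall i j : 'I_g, ~~ (0 < spectral_diag (mxC M) 0 i) ->
    ~~ (0 < spectral_diag (mxC M) 0 j) -> i = j.
Proof.
move=> sM [s [hs [hpos _]]].
have := orthomx_spectralP (mxC_normal sM).
set P := spectralmx _; set d := spectral_diag _ => hMC.
have e1 : char_poly (mxC M) = \prod_(x <- [seq d 0 i | i <- index_enum 'I_g]) ('X - x%:P).
  rewrite hMC char_poly_simil ?spectral_unit // char_poly_trig ?diag_mx_is_trig //.
  by rewrite big_map; apply: eq_bigr => i _; rewrite mxE eqxx mulr1n.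
have e2 : char_poly (mxC M) = \prod_(x <- [seq (real_complex R) x | x <- s]) ('X - x%:P).
  by rewrite mxCE -map_char_poly hs map_prod_XsubC big_map.
have hperm := prod_XsubC_eq (etrans (esym e2) e1).
have szs : size s = g.
  have := size_char_poly M; rewrite hs size_prod_XsubC; by case.
have hc : leq (count (fun z : R[i] => ~~ (0 < z)) [seq d 0 i | i <- index_enum 'I_g]) 1.
  rewrite -(permP hperm) count_map.
  have -> : count (preim (real_complex R) (fun z : R[i] => ~~ (0 < z)%R)) s =
            count (predC (fun x : R => 0 < x)) s.
    by apply: eq_count => x /=; rewrite ltcR.
  have := count_predC (fun x : R => 0 < x) s; rewrite hpos szs; lia.
move=> i j hi hj; apply/eqP; apply: contraT => nij.
move: hc; rewrite count_map count_enum_card.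
have : leq 2 #|[pred k : 'I_g | ~~ (0 < d 0 k)]|.
  by apply/card_gt1P; exists i, j; rewrite !inE hi hj.
move=> /= h1 h2; move: (leq_ltn_trans h2 h1); by rewrite ltnn.
Qed.


Lemma mxconj_lin (R : rcfType) m n (a b : R[i]) (A B : 'M[R[i]]_(m,n)) :
  mxconj (a *: A + b *: B) = a^* *: mxconj A + b^* *: mxconj B.
Proof. by apply/matrixP => i j; rewrite !mxE rmorphD !rmorphM. Qed.

Lemma mxC_inj0 (R : rcfType) m n (A : 'M[R]_(m,n)) : mxC A = 0 -> A = 0.
Proof.
move=> /matrixP h; apply/matrixP => i j; have := h i j.
by rewrite !mxE => /eqP; rewrite eq_complex /= => /andP[/eqP -> _].
Qed.

Lemma nonpos_sum0 (C : numDomainType) (a b : C) : a <= 0 -> b <= 0 -> 0 <= a + b -> a = 0.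
Proof.
move=> ha hb hab; apply/le_anti; rewrite ha /=.
by apply: le_trans hab _; rewrite gerDl.
Qed.

Lemma Lreal (R : rcfType) g (M : 'M[R]_g) : M^T = M -> has_signature M g.-1 1 ->
  forall x y : 'cV[R]_g, bl M x x < 0 -> bl M x y = 0 -> y != 0 -> 0 < bl M y y.
Proof.
move=> sM hsig x y hx hxy hy0.
have hCP := sig_CP sM hsig.
have HS := fun u w => Hsum u w sM.
move: hCP HS; set P := spectralmx _; set d := spectral_diag _ => hCP HS.
have uP : P \in unitmx by apply: spectral_unit.
set X := P *m mxC x; set Y := P *m mxC y.
have hxs : (bl M x x)%:C%C = \sum_i (X i 0)^* * d 0 i * X i 0.
  by rewrite -bl_mxC -[X in bl _ X _]mxconj_mxC HS.
have hys : (bl M y y)%:C%C = \sum_i (Y i 0)^* * d 0 i * Y i 0.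
  by rewrite -bl_mxC -[X in bl _ X _]mxconj_mxC HS.
have term_ge0 : forall (W : R[i]) i, 0 < d 0 i -> 0 <= W^* * d 0 i * W.
  by move=> W i hi; rewrite mulrAC mulr_ge0 // ?(ltW hi) // mulrC mul_conjC_ge0.
case: (pickP (fun k => ~~ (0 < d 0 k))) => [k hk | hall]; last first.
  have : 0 <= (bl M x x)%:C%C.
    rewrite hxs; apply: sumr_ge0 => i _; apply: term_ge0.
    by have := hall i => /= /negbFE.
  by rewrite lecR => h; move: (lt_le_trans hx h); rewrite ltxx.
have dpos : forall i, i != k -> 0 < d 0 i.
  move=> i nik; apply: contraT => hi; by rewrite (hCP _ _ hi hk) eqxx in nik.
have posW : forall W : 'cV[R[i]]_g, W k 0 = 0 ->
   0 <= \sum_i (W i 0)^* * d 0 i * W i 0 /\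
   (\sum_i (W i 0)^* * d 0 i * W i 0 = 0 -> W = 0).
  move=> W hWk.
  have tge0 : forall i, 0 <= (W i 0)^* * d 0 i * W i 0.
    move=> i; case: (eqVneq i k) => [-> | nik]; first by rewrite hWk mulr0.
    exact: term_ge0 (dpos _ nik).
  split; first by apply: sumr_ge0 => i _; apply: tge0.
  move=> /eqP; rewrite psumr_eq0; last by move=> i _; apply: tge0.
  move=> /allP hz; apply/matrixP => i j; rewrite (ord1 j) mxE.
  case: (eqVneq i k) => [-> // | nik].
  have := hz i (mem_index_enum _); rewrite /= mulrAC mulf_eq0.
  rewrite (negbTE (lt0r_neq0 (dpos _ nik))) orbF mulrC mul_conjC_eq0.
  by move/eqP.
rewrite ltNge; apply/negP => hy.
pose a := Y k 0; pose b := - X k 0.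
pose z := a *: mxC x + b *: mxC y.
have Pz : P *m z = a *: X + b *: Y by rewrite mulmxDr -!scalemxAr.
have Pzk : (P *m z) k 0 = 0.
  rewrite Pz; rewrite [in LHS]mxE; rewrite [(a *: X) k 0]mxE [(b *: Y) k 0]mxE /a /b; ring.
have [zge0 _] := posW _ Pzk.
have Hz : bl (mxC M) (mxconj z) z =
    a^* * a * (bl M x x)%:C%C + b^* * b * (bl M y y)%:C%C.
  rewrite mxconj_lin !mxconj_mxC /z !blDl !blDr !blZl !blZr !bl_mxC.
  have hyx : bl M y x = 0 by rewrite (blC _ _ sM) hxy.
  rewrite hxy hyx; ring.
rewrite -HS Hz in zge0.
have hxC : (bl M x x)%:C%C < 0 by rewrite ltcR.
have hyC : (bl M y y)%:C%C <= 0 by rewrite lecR.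
have aa0 : 0 <= a^* * a by rewrite mulrC mul_conjC_ge0.
have bb0 : 0 <= b^* * b by rewrite mulrC mul_conjC_ge0.
have := nonpos_sum0 (mulr_ge0_le0 aa0 (ltW hxC)) (mulr_ge0_le0 bb0 hyC) zge0.
move/eqP; rewrite mulf_eq0 (negbTE (ltr0_neq0 hxC)) orbF mulrC mul_conjC_eq0.
move=> /eqP ha.
have [yge0 y0] := posW _ ha.
rewrite -hys in yge0 y0.
have := y0 (le_anti (introT andP (conj hyC yge0))).
move=> hY; have : mxC y = 0 by rewrite -(mulKmx uP (mxC y)) -/Y hY mulmx0.
by move/mxC_inj0 => y00; rewrite y00 eqxx in hy0.
Qed.


Definition mxIm (R : rcfType) m n (A : 'M[R[i]]_(m, n)) : 'M[R]_(m, n) :=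
  map_mx (@complex.Im R) A.

Lemma mxC_trg (R : rcfType) m n (A : 'M[R]_(m,n)) : (mxC A)^T = mxC A^T.
Proof. by rewrite !mxCE map_trmx. Qed.

Lemma mxC_mul (R : rcfType) m n p (A : 'M[R]_(m,n)) (B : 'M[R]_(n,p)) :
  mxC (A *m B) = mxC A *m mxC B.
Proof. by rewrite !mxCE map_mxM. Qed.

Lemma decomp (R : rcfType) m n (c : 'M[R[i]]_(m,n)) :
  c = mxC (mxRe c) + 'i%C *: mxC (mxIm c).
Proof. by apply/matrixP => i j; rewrite !mxE -complexE. Qed.

Lemma mxconj_dec (R : rcfType) m n (P Q : 'M[R]_(m,n)) :
  mxconj (mxC P + 'i%C *: mxC Q) = mxC P - 'i%C *: mxC Q.
Proof.
apply/matrixP => i j; rewrite !mxE; set x := P i j; set y := Q i j.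
apply/eqP; rewrite eq_complex /=; apply/andP; split; apply/eqP; ring.
Qed.

Lemma mxRe_dec (R : rcfType) m n (P Q : 'M[R]_(m,n)) :
  mxRe (mxC P + 'i%C *: mxC Q) = P.
Proof. apply/matrixP => i j; rewrite !mxE /=; ring. Qed.

Lemma mxRe_mul (R : rcfType) m n p q (X : 'M[R]_(m,n)) (K : 'M[R[i]]_(n,p))
   (Y : 'M[R]_(p,q)) : mxRe (mxC X *m K *m mxC Y) = X *m mxRe K *m Y.
Proof.
rewrite {1}(decomp K) mulmxDr mulmxDl -scalemxAr -scalemxAl.
by rewrite -!mxC_mul mxRe_dec.
Qed.

Lemma reM2 (R : rcfType) (p q : R) :
  complex.Re (-2 * ((p%:C)%C + 'i%C * (q%:C)%C) * ((p%:C)%C + 'i%C * (q%:C)%C)) =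
  -2 * (p^+2 - q^+2).
Proof. rewrite /=; ring. Qed.

Lemma ML (R : rcfType) g (M : 'M[R]_g) (c : 'cV[R[i]]_g) :
  M^T = M -> has_signature M g.-1 1 ->
  bl (mxC M) (mxconj c) c < 0 -> bl (mxC M) c c = 1 ->
  posdef_mx (M + M *m mxRe ((- (2%:R^-1) * bl (mxC M) c c)^-1 *: (c *m c^T)) *m M).
Proof.
move=> sM hsig hneg hlam.
have L := Lreal sM hsig.
have sMC : (mxC M)^T = mxC M by rewrite mxC_trg sM.
set a := mxRe c; set b := mxIm c.
have hc : c = mxC a + 'i%C *: mxC b by apply: decomp.
set A := bl M a a; set B := bl M b b; set Cab := bl M a b.
have hba : bl M b a = Cab by rewrite (blC _ _ sM).
have eH : bl (mxC M) (mxconj c) c = (A + B)%:C%C.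
  rewrite hc mxconj_dec blBl !blDr !blZl !blZr !bl_mxC hba -/A -/B -/Cab.
  apply/eqP; rewrite eq_complex /=; apply/andP; split; apply/eqP; ring.
have eL : bl (mxC M) c c = ((A - B) +i* (2 * Cab))%C.
  rewrite hc !blDl !blDr !blZl !blZr !bl_mxC hba -/A -/B -/Cab.
  apply/eqP; rewrite eq_complex /=; apply/andP; split; apply/eqP; ring.
have hAB : A + B < 0 by rewrite -ltcR -eH.
have [hA1 hC0] : A - B = 1 /\ 2 * Cab = 0.
  by move: hlam; rewrite eL => /eqP; rewrite eq_complex /= => /andP[/eqP -> /eqP ->].
have hC : Cab = 0 by lra.
have hB : B < 0 by lra.
move=> v hv.
set V := bl M v v; set p := bl M v a; set q := bl M v b.
have hvb : bl M b v = q by rewrite (blC _ _ sM).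
have hva : bl M a v = p by rewrite (blC _ _ sM).
have eQ : (v^T *m (M + M *m mxRe ((- (2%:R^-1) * bl (mxC M) c c)^-1 *: (c *m c^T)) *m M) *m v) 0 0
   = V - 2 * (p^+2 - q^+2).
  rewrite mulmxDr mulmxDl mxE -/(bl M v v) -/V; congr (_ + _).
  rewrite hlam mulr1 invrN invrK.
  have -> : v^T *m (M *m mxRe (- 2%:R *: (c *m c^T)) *m M) *m v =
            mxRe (mxC (v^T *m M) *m (- 2%:R *: (c *m c^T)) *m mxC (M *m v)).
    by rewrite mxRe_mul !mulmxA.
  rewrite mxE.
  have -> : (mxC (v^T *m M) *m (- 2%:R *: (c *m c^T)) *m mxC (M *m v)) 0 0 =
     - 2%:R * bl (mxC M) (mxC v) c * bl (mxC M) c (mxC v).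
    rewrite -scalemxAr -scalemxAl mxE.
    have -> : mxC (v^T *m M) *m (c *m c^T) *m mxC (M *m v) =
      (mxC (v^T *m M) *m c) *m (c^T *m mxC (M *m v)) by rewrite !mulmxA.
    rewrite mxE big_ord1 mulrA.
    by rewrite /bl mxC_mul -mxC_trg !mxC_mul !mulmxA.
  have hzc : bl (mxC M) (mxC v) c = (p%:C + 'i * q%:C)%C by rewrite hc blDr blZr !bl_mxC.
  by rewrite [bl _ c (mxC v)](blC _ _ sMC) hzc reM2 mulNr.
rewrite eQ.
have hz : forall w : 'cV[R]_g, bl M b w = 0 -> 0 <= bl M w w.
  move=> w hw; case: (eqVneq w 0) => [-> | wn0]; first by rewrite /bl mulmx0 mxE.
  exact/ltW/(L _ _ hB hw wn0).
have [/andP[/eqP hp /eqP hq] | hpq] := boolP ((p == 0) && (q == 0)).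
  have := L _ _ hB (etrans hvb hq) hv; rewrite -/V hp hq => hV; lra.
have hP2 : 0 <= p^+2 by apply: sqr_ge0.
have hQ2 : 0 <= q^+2 by apply: sqr_ge0.
have hPQ : 0 < p^+2 + q^+2.
  move: hpq; rewrite negb_and => /orP[] hn.
    have : 0 < p^+2 by rewrite lt0r sqr_ge0 expf_neq0.
    lra.
  have : 0 < q^+2 by rewrite lt0r sqr_ge0 expf_neq0.
  lra.
case: (eqVneq a 0) => ha.
  have hp : p = 0 by rewrite /p ha /bl mulmx0 mxE.
  have hA : A = 0 by rewrite /A ha /bl mulmx0 mxE.
  have hw : bl M b (v + q *: b) = 0.
    rewrite blDr blZr hvb -/B; nra.
  have := hz _ hw.
  rewrite !blDl !blDr !blZl !blZr hvb -/V -/q -/B.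
  rewrite hp in hPQ *; nra.
have hA : 0 < A by apply: (L _ _ hB); rewrite ?hba ?hC.
pose y := (A * B) *: v - (q * A) *: b - (p * B) *: a.
have hw : bl M b y = 0.
  rewrite /y !blBr !blZr hvb hba hC -/B; ring.
have := hz _ hw.
have -> : bl M y y = (A * B) ^+ 2 * V - A ^+ 2 * B * q ^+ 2 - A * B ^+ 2 * p ^+ 2.
  rewrite /y !blBl !blBr !blZl !blZr hvb hva hba -/A -/B -/V -/p -/q -/Cab hC; ring.
move=> hQy.
have hAB0 : A * B < 0 by nra.
have h1 : (A * B) * V - A * q ^+ 2 - B * p ^+ 2 <= 0.
  have e : (A * B) ^+ 2 * V - A ^+ 2 * B * q ^+ 2 - A * B ^+ 2 * p ^+ 2 =
           (A * B) * ((A * B) * V - A * q ^+ 2 - B * p ^+ 2) by ring.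
  rewrite e in hQy; nra.
have h2 : B * p ^+ 2 - A * q ^+ 2 < 0.
  move: hpq; rewrite negb_and => /orP[] hn.
    have : 0 < p^+2 by rewrite lt0r sqr_ge0 expf_neq0.
    nra.
  have : 0 < q^+2 by rewrite lt0r sqr_ge0 expf_neq0.
  nra.
have eA : A = B + 1 by lra.
have key : (- (A * B)) * (V - 2 * (p ^+ 2 - q ^+ 2)) >= (A + B) * (B * p ^+ 2 - A * q ^+ 2).
  rewrite eA in h1 *; nra.
have : 0 < (- (A * B)) * (V - 2 * (p ^+ 2 - q ^+ 2)) by nra.
rewrite pmulr_rgt0 //; lra.
Qed.


Lemma mxconjZ (R : rcfType) m n (u : R[i]) (A : 'M[R[i]]_(m,n)) :
  mxconj (u *: A) = u^* *: mxconj A.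
Proof. by apply/matrixP => i j; rewrite !mxE rmorphM. Qed.

Unset Implicit Arguments.

Theorem mainTheorem4 (R : rcfType) (g : nat) (M : 'M[R]_g) (c : 'cV[R[i]]_g) :
  sym_mx M -> has_signature M g.-1 1 ->
  ((mxconj c)^T *m mxC M *m c) 0 0 < 0 ->
  ((c^T *m mxC M *m c) 0 0 != 0) /\
  posdef_mx (M + M *m mxRe ((- (2%:R^-1) * (c^T *m mxC M *m c) 0 0)^-1 *: (c *m c^T)) *m M).
Proof.
move=> sM hsig hneg.
have hH : bl (mxC M) (mxconj c) c < 0 by [].
rewrite -/(bl (mxC M) c c).
have L := Lreal sM hsig.
have hlam0 : bl (mxC M) c c != 0.
  set a := mxRe c; set b := mxIm c.
  have hc : c = mxC a + 'i%C *: mxC b by apply: decomp.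
  set A := bl M a a; set B := bl M b b; set Cab := bl M a b.
  have hba : bl M b a = Cab by rewrite (blC _ _ sM).
  have eH : bl (mxC M) (mxconj c) c = (A + B)%:C%C.
    rewrite hc mxconj_dec blBl !blDr !blZl !blZr !bl_mxC hba -/A -/B -/Cab.
    apply/eqP; rewrite eq_complex /=; apply/andP; split; apply/eqP; ring.
  have eL : bl (mxC M) c c = ((A - B) +i* (2 * Cab))%C.
    rewrite hc !blDl !blDr !blZl !blZr !bl_mxC hba -/A -/B -/Cab.
    apply/eqP; rewrite eq_complex /=; apply/andP; split; apply/eqP; ring.
  have hAB : A + B < 0 by rewrite -ltcR -eH.
  rewrite eL; apply/negP => /eqP [hAB0 hC0].
  have hC : Cab = 0 by lra.
  have hB : B < 0 by lra.
  case: (eqVneq a 0) => ha.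
    have hA : A = 0 by rewrite /A ha /bl mulmx0 mxE.
    have : (0:R) < 0 by lra.
    by rewrite ltxx.
  have hA : 0 < A by apply: (L _ _ hB); rewrite ?hba ?hC.
  have : (0:R) < 0 by lra.
  by rewrite ltxx.
split => //.
set lam := bl (mxC M) c c.
pose u := sqrtC (lam^-1).
have hu2 : u ^+ 2 = lam^-1 by apply: sqrtCK.
have hu0 : u != 0.
  apply/negP => /eqP h0; move: hu2; rewrite h0 expr0n /= => /esym/eqP.
  by rewrite invr_eq0 (negbTE hlam0).
pose c' := u *: c.
have hH' : bl (mxC M) (mxconj c') c' < 0.
  rewrite /c' mxconjZ blZl blZr mulrA pmulr_rlt0 //.
  by rewrite mulrC mul_conjC_gt0.
have hL' : bl (mxC M) c' c' = 1.
  rewrite /c' blZl blZr mulrA -expr2 hu2 -/lam mulVf //.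
have := ML sM hsig hH' hL'.
suff -> : (- 2%:R^-1 * bl (mxC M) c' c')^-1 *: (c' *m c'^T) =
          (- 2%:R^-1 * lam)^-1 *: (c *m c^T) by [].
rewrite hL' /c' linearZ /= -scalemxAl -scalemxAr scalerA scalerA.
congr (_ *: _).
by rewrite mulr1 -mulrA -expr2 hu2 invfM.
Qed.
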